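(* Fix $\gamma\in(2/3,1)$. For $N>0$ let $w_N=(N,N)$, $M=N-\sqrt2N^\gamma$, $K=[2\sqrt2N^{1+\gamma}]+1$, $z_j=(jM/K,\,jM/K+\sqrt2N^\gamma)$ for $0\le j\le K$, $\mathcal{C}=\{z_j\}_{j=0}^K$, and let $\mathcal{C}'$ be the image of $\mathcal{C}$ under $T_N(x,y)=(N-x,N-y)$. Then for all sufficiently large $N$ and every $z\in\mathcal{C}\cup\mathcal{C}'$, $$\sqrt{a(0,z)}+\sqrt{a(z,w_N)}-\sqrt{a(0,w_N)}\le -N^{2\gamma-1}.$$
   Context: $a(w,w')$ denotes the area of the axis-parallel rectangle with corners $w$ and $w'$. $[x]$ is the integer part. *)

(* Defs.v *)
From Stdlib Require Import Reals Lra Lia ZArith.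
Open Scope R_scope.

Definition area (w w' : R * R) : R :=
  Rabs (fst w' - fst w) * Rabs (snd w' - snd w).

Definition origin : R * R := (0, 0).
Definition wN (N : R) : R * R := (N, N).

Definition shiftN (g N : R) : R := sqrt 2 * Rpower N g.
Definition MN (g N : R) : R := N - shiftN g N.
(* K = [2 sqrt 2 N^(1+gamma)] + 1  ([x] = integer part = floor) *)
Definition KN (g N : R) : nat :=
  (Z.to_nat (Int_part (2 * sqrt 2 * Rpower N (1 + g))) + 1)%nat.

Definition zj (g N : R) (j : nat) : R * R :=
  (INR j * MN g N / INR (KN g N),
   INR j * MN g N / INR (KN g N) + shiftN g N).

Definition TN (N : R) (p : R * R) : R * R := (N - fst p, N - snd p).

Definition inC (g N : R) (p : R * R) : Prop :=
  exists j : nat, (j <= KN g N)%nat /\ p = zj g N j.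

Definition inC' (g N : R) (p : R * R) : Prop :=
  exists q, inC g N q /\ p = TN N q.

(* Main.v *)
Require Import Defs.
From Stdlib Require Import Reals.
From Stdlib Require Import Lra Lia.
Open Scope R_scope.

Lemma sq_bound (A c : R) : 0 < A -> 0 <= c -> c <= A * A ->
  sqrt (A * A - c) <= A - c / (2 * A).
Proof.
  intros hA hc hcA.
  assert (h0 : 0 <= A - c / (2 * A)).
  { assert (c / (2 * A) <= A / 2).
    { apply Rmult_le_reg_r with (2 * A); [lra|].
      unfold Rdiv; rewrite Rmult_assoc, Rinv_l by lra. nra. }
    lra. }
  rewrite <- (sqrt_Rsqr (A - c / (2 * A))) by exact h0.
  apply sqrt_le_1_alt. unfold Rsqr.
  replace ((A - c / (2 * A)) * (A - c / (2 * A)))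
    with (A * A - c + (c / (2 * A)) * (c / (2 * A))).
  2:{ field. lra. }
  assert (0 <= (c / (2 * A)) * (c / (2 * A))) by nra. lra.
Qed.

Lemma key (N s x : R) : 0 < s -> 0 <= x -> x + s <= N ->
  sqrt (x * (x + s)) + sqrt ((N - x) * (N - (x + s))) - N <= - (s * s / (2 * N)).
Proof.
  intros hs hx hxN.
  set (A := x + s / 2). set (B := N - x - s / 2). set (c := s * s / 4).
  assert (hA : 0 < A) by (unfold A; lra).
  assert (hB : 0 < B) by (unfold B; lra).
  assert (hc : 0 <= c) by (unfold c; nra).
  assert (e1 : x * (x + s) = A * A - c) by (unfold A, c; field).
  assert (e2 : (N - x) * (N - (x + s)) = B * B - c) by (unfold B, c; field).
  rewrite e1, e2.
  assert (hcA : c <= A * A) by (unfold c, A; nra).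
  assert (hcB : c <= B * B) by (unfold c, B; nra).
  pose proof (sq_bound A c hA hc hcA).
  pose proof (sq_bound B c hB hc hcB).
  assert (hN : N = A + B) by (unfold A, B; field).
  assert (c / (2 * A) + c / (2 * B) >= s * s / (2 * N)).
  { rewrite hN.
    replace (s * s) with (4 * c) by (unfold c; field).
    apply Rle_ge.
    replace (c / (2 * A) + c / (2 * B)) with (c * (A + B) / (2 * A * B)) by (field; lra).
    apply Rmult_le_reg_r with (2 * A * B * (A + B)). { assert (0 < A * B) by (apply Rmult_lt_0_compat; lra). apply Rmult_lt_0_compat; nra. }
    replace (4 * c / (2 * (A + B)) * (2 * A * B * (A + B))) with (4 * c * A * B) by (field; lra).
    replace (c * (A + B) / (2 * A * B) * (2 * A * B * (A + B))) with (c * (A + B) * (A + B)) by (field; lra).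
    assert (0 <= c * ((A - B) * (A - B))) by (apply Rmult_le_pos; [lra | apply Rle_0_sqr]).
    replace (c * (A + B) * (A + B)) with (4 * c * A * B + c * ((A - B) * (A - B))) by ring. lra. }
  lra.
Qed.

Lemma Rpower_pos' (a b : R) : 0 < Rpower a b.
Proof. unfold Rpower. apply exp_pos. Qed.

Theorem lemma3p2 (g : R) (hg : 2 / 3 < g < 1) :
  exists N0 : R, forall N : R, N0 <= N -> 0 < N ->
    forall z : R * R, inC g N z \/ inC' g N z ->
      sqrt (area origin z) + sqrt (area z (wN N)) - sqrt (area origin (wN N))
        <= - Rpower N (2 * g - 1).
Proof.
  exists (Rpower 2 (/ (1 - g))).
  intros N hN0 hN z hz.
  set (s := shiftN g N).
  assert (hs : 0 < s).
  { unfold s, shiftN. apply Rmult_lt_0_compat. apply sqrt_lt_R0; lra. apply Rpower_pos'. }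
  assert (hsN : s <= N).
  { assert (h2 : 2 <= Rpower N (1 - g)).
    { replace 2 with (Rpower (Rpower 2 (/ (1 - g))) (1 - g)).
      apply Rle_Rpower_l; [lra | split; [apply Rpower_pos' | exact hN0]].
      rewrite Rpower_mult. replace (/ (1 - g) * (1 - g)) with 1 by (field; lra).
      apply Rpower_1; lra. }
    assert (hN' : N = Rpower N g * Rpower N (1 - g)).
    { rewrite <- Rpower_plus. replace (g + (1 - g)) with 1 by ring. now rewrite Rpower_1. }
    assert (sqrt 2 <= 2).
    { pose proof (sqrt_sqrt 2 ltac:(lra)). pose proof (sqrt_pos 2). nra. }
    pose proof (Rpower_pos' N g).
    unfold s, shiftN. rewrite hN' at 2. nra. }
  assert (hpow : Rpower N (2 * g - 1) = s * s / (2 * N)).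
  { unfold s, shiftN.
    replace (sqrt 2 * Rpower N g * (sqrt 2 * Rpower N g))
      with ((sqrt 2 * sqrt 2) * (Rpower N g * Rpower N g)) by ring.
    rewrite sqrt_sqrt by lra. rewrite <- Rpower_plus.
    replace (g + g) with ((2 * g - 1) + 1) by ring.
    rewrite Rpower_plus, Rpower_1 by lra. field. lra. }
  rewrite hpow.
  assert (hw : area origin (wN N) = N * N).
  { unfold area, origin, wN; simpl. rewrite !Rminus_0_r, Rabs_right by lra. ring. }
  rewrite hw, sqrt_square by lra.
  assert (hx : forall j, (j <= KN g N)%nat ->
     0 <= INR j * MN g N / INR (KN g N) /\ INR j * MN g N / INR (KN g N) + s <= N).
  { intros j hj.
    assert (hK : 1 <= INR (KN g N)).
    { unfold KN. rewrite plus_INR. simpl. pose proof (pos_INR (Z.to_nat (Int_part (2 * sqrt 2 * Rpower N (1 + g))))). lra. }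
    assert (hjK : INR j <= INR (KN g N)) by (apply le_INR; exact hj).
    pose proof (pos_INR j).
    assert (hM : 0 <= MN g N) by (unfold MN; fold s; lra).
    split.
    - unfold Rdiv. apply Rmult_le_pos. apply Rmult_le_pos; lra.
      left; apply Rinv_0_lt_compat; lra.
    - assert (hjm : INR j * MN g N / INR (KN g N) <= MN g N).
      { apply Rmult_le_reg_r with (INR (KN g N)); [lra|].
        unfold Rdiv. rewrite Rmult_assoc, Rinv_l by lra. nra. }
      assert (MN g N = N - s) by reflexivity. lra. }
  destruct hz as [[j [hj ->]] | [q [[j [hj ->]] ->]]];
    destruct (hx j hj) as [hx1 hx2];
    set (x := INR j * MN g N / INR (KN g N)) in *;
    unfold area, origin, wN, TN, zj; simpl; fold x; fold s.
  - rewrite !Rminus_0_r.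
    rewrite (Rabs_right x), (Rabs_right (x + s)), (Rabs_right (N - x)),
      (Rabs_right (N - (x + s))) by lra.
    apply key; lra.
  - rewrite !Rminus_0_r.
    replace (N - (N - x)) with x by ring.
    replace (N - (N - (x + s))) with (x + s) by ring.
    rewrite (Rabs_right x), (Rabs_right (x + s)), (Rabs_right (N - x)),
      (Rabs_right (N - (x + s))) by lra.
    pose proof (key N s x hs hx1 hx2). lra.
Qed.
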